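(* Let $G\in L^\infty_{q\times p}$ be such that its Hankel operator $H$ satisfies (C1) $H$ has finite rank, and (C2) no maximizing vector of $H$ belongs to $SH^2_p$ and the linear span of the maximizing vectors of $H$ has dimension $p$. Let $\mathcal M_0$ be a finite dimensional subspace of $H^2_p$ with $S^*\mathcal M_0\subset\mathcal M_0$, let $P_0$ be the orthogonal projection onto $\mathcal M_0$, and put $\mathcal X_0=W\mathcal M_0^\perp\subset\mathcal X$. Then $\mathcal X_0$ is $Z$-invariant and, with $Z_0=Z|_{\mathcal X_0}:\mathcal X_0\to\mathcal X_0$, $\Pi_{\mathcal X_0}:\mathcal X\to\mathcal X_0$ the orthogonal projection, and $W_0=\Pi_{\mathcal X_0}W:H^2_p\to\mathcal X_0$, we have $r_{\mathrm{spec}}(Z_0)\le r_{\mathrm{spec}}(Z)$ and $Z^kW(I-P_0)=\Pi_{\mathcal X_0}^*Z_0^kW_0(I-P_0)$ for $k=0,1,2,\dots$.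
   Context: $H:H^2_p\to K^2_q$, $Hf=P_-(Gf)$, with $P_-$ the orthogonal projection of $L^2_q$ onto $K^2_q=L^2_q\ominus H^2_q$; $S$ forward shift on $H^2_p$; $V$ multiplication by $e^{it}$ on $L^2_q$, $V_-=P_-V|_{K^2_q}$; $\mathcal X=\overline{\operatorname{Im}H}=\operatorname{Im}H$; $Z=V_-|_{\mathcal X}:\mathcal X\to\mathcal X$; $W:H^2_p\to\mathcal X$, $Wf=Hf$. $\Pi_{\mathcal X_0}^*$ is the inclusion of $\mathcal X_0$ into $\mathcal X$. A maximizing vector of $H$ is a nonzero $h$ with $\|Hh\|=\|H\|\,\|h\|$. *)

(* Defs.v *)
(* Hilbert spaces are modelled on the Fourier side (Plancherel):
   an element of L^2_d (C^d-valued functions on the unit circle) is the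
   sequence of its Fourier coefficients  f : Z -> nat -> C,
   f n j = j-th coordinate of the n-th Fourier coefficient (j < d). *)
From Stdlib Require Import Reals ZArith.
From Coquelicot Require Import Coquelicot.
Open Scope R_scope.

Definition seqv := Z -> nat -> C.

Fixpoint fsumR (d : nat) (a : nat -> R) : R :=
  match d with O => 0 | S d' => fsumR d' a + a d' end.
Fixpoint fsumC (d : nat) (a : nat -> C) : C :=
  match d with O => RtoC 0 | S d' => Cplus (fsumC d' a) (a d') end.

Definition zterm (a : Z -> C) (k : nat) : C :=
  Cplus (a (Z.of_nat k)) (a (- Z.of_nat k - 1)%Z).
Definition zsummable (a : Z -> C) : Prop :=
  ex_series (fun k => Re (zterm a k)) /\ ex_series (fun k => Im (zterm a k)).
Definition zsum (a : Z -> C) : C :=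
  (Series (fun k => Re (zterm a k)), Series (fun k => Im (zterm a k))).

Definition vzero : seqv := fun _ _ => RtoC 0.
Definition vadd (f g : seqv) : seqv := fun n j => Cplus (f n j) (g n j).
Definition vscal (c : C) (f : seqv) : seqv := fun n j => Cmult c (f n j).
Definition vsub (f g : seqv) : seqv := fun n j => Cminus (f n j) (g n j).

Fixpoint lincomb (m : nat) (c : nat -> C) (b : nat -> seqv) : seqv :=
  match m with O => vzero | S m' => vadd (lincomb m' c b) (vscal (c m') (b m')) end.

Definition sqn (d : nat) (f : seqv) (n : Z) : R :=
  fsumR d (fun j => (Cmod (f n j)) ^ 2).
Definition L2 (d : nat) (f : seqv) : Prop :=
  (forall n j, (d <= j)%nat -> f n j = RtoC 0) /\
  ex_series (fun k => sqn d f (Z.of_nat k) + sqn d f (- Z.of_nat k - 1)%Z).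
Definition vnorm (d : nat) (f : seqv) : R :=
  sqrt (Series (fun k => sqn d f (Z.of_nat k) + sqn d f (- Z.of_nat k - 1)%Z)).
Definition ip (d : nat) (f g : seqv) : C :=
  zsum (fun n => fsumC d (fun j => Cmult (f n j) (Cconj (g n j)))).

Definition H2 (d : nat) (f : seqv) : Prop := L2 d f /\ forall n j, (n < 0)%Z -> f n j = RtoC 0.
Definition K2 (d : nat) (f : seqv) : Prop := L2 d f /\ forall n j, (0 <= n)%Z -> f n j = RtoC 0.

Definition Pm (f : seqv) : seqv := fun n j => if Z.ltb n 0 then f n j else RtoC 0.
(* multiplication by e^{it}: shifts Fourier coefficients *)
Definition Vmul (f : seqv) : seqv := fun n j => f (n - 1)%Z j.
Definition Vm (f : seqv) : seqv := Pm (Vmul f).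
Definition Sh (f : seqv) : seqv := Vmul f.
Definition Sadj (f : seqv) : seqv := fun n j => if Z.ltb n 0 then RtoC 0 else f (n + 1)%Z j.

(* A matrix symbol G in L^infty_{q x p}, given by its Fourier coefficients
   g m i j (i < q, j < p).  Multiplication by G is the Laurent operator
   (Gf)_m = sum_n g(m-n) f_n. *)
Definition msym := Z -> nat -> nat -> C.
Definition Gterm (p : nat) (g : msym) (f : seqv) (m : Z) (i : nat) : Z -> C :=
  fun n => fsumC p (fun j => Cmult (g (m - n)%Z i j) (f n j)).
Definition Gmul (p : nat) (g : msym) (f : seqv) : seqv :=
  fun m i => zsum (Gterm p g f m i).
(* G in L^infty_{q x p}  <=>  its Laurent operator is bounded L^2_p -> L^2_q *)
Definition Linf (q p : nat) (g : msym) : Prop :=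
  (forall m i j, ((q <= i)%nat \/ (p <= j)%nat) -> g m i j = RtoC 0) /\
  exists M : R, forall f, L2 p f ->
    (forall m i, zsummable (Gterm p g f m i)) /\
    L2 q (Gmul p g f) /\ vnorm q (Gmul p g f) <= M * vnorm p f.

Definition Hank (p : nat) (g : msym) (f : seqv) : seqv := Pm (Gmul p g f).

Definition Hnorm (q p : nat) (g : msym) : R :=
  real (Lub_Rbar (fun r => exists f, H2 p f /\ vnorm p f <= 1 /\ r = vnorm q (Hank p g f))).

Definition maximizing (q p : nat) (g : msym) (h : seqv) : Prop :=
  H2 p h /\ h <> vzero /\ vnorm q (Hank p g h) = Hnorm q p g * vnorm p h.

Definition span (A : seqv -> Prop) (x : seqv) : Prop :=
  exists m c b, (forall k, (k < m)%nat -> A (b k)) /\ x = lincomb m c b.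

Definition lin_indep (m : nat) (b : nat -> seqv) : Prop :=
  forall c, lincomb m c b = vzero -> forall k, (k < m)%nat -> c k = RtoC 0.

Definition span_dim (A : seqv -> Prop) (m : nat) : Prop :=
  exists b, (forall k, (k < m)%nat -> span A (b k)) /\ lin_indep m b /\
    forall x, span A x -> exists c, x = lincomb m c b.

Definition finite_rank (p : nat) (g : msym) : Prop :=
  exists m b, forall f, H2 p f -> exists c, Hank p g f = lincomb m c b.

Definition fin_dim_subspace (p : nat) (M : seqv -> Prop) : Prop :=
  exists m b, (forall k, (k < m)%nat -> H2 p (b k)) /\
    forall x, M x <-> exists c, x = lincomb m c b.

Definition is_orth_proj (d : nat) (U M : seqv -> Prop) (P : seqv -> seqv) : Prop :=
  forall f, U f -> M (P f) /\ forall h, M h -> ip d (vsub f (P f)) h = RtoC 0.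

Definition resolvent (d : nat) (Y : seqv -> Prop) (T : seqv -> seqv) (l : C) : Prop :=
  exists Rl : seqv -> seqv,
    (forall y, Y y -> Y (Rl y) /\ vsub (T (Rl y)) (vscal l (Rl y)) = y) /\
    (forall x, Y x -> Rl (vsub (T x) (vscal l x)) = x) /\
    exists M : R, forall y, Y y -> vnorm d (Rl y) <= M * vnorm d y.
Definition rspec (d : nat) (Y : seqv -> Prop) (T : seqv -> seqv) : Rbar :=
  Lub_Rbar (fun r => exists l, ~ resolvent d Y T l /\ r = Cmod l).

(* Main.v *)
Require Import Defs.
From Stdlib Require Import Reals ZArith Lia Lra List.
From Stdlib Require Import FunctionalExtensionality Classical IndefiniteDescription.
From Coquelicot Require Import Coquelicot.
Open Scope R_scope.

Ltac Ceq := unfold Cminus, Cplus, Cmult, Copp, Cconj, RtoC, Re, Im in *;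
  apply injective_projections; simpl; ring.

Lemma fsumC_ext d a b : (forall j, (j < d)%nat -> a j = b j) -> fsumC d a = fsumC d b.
Proof. induction d; simpl; intros; auto. rewrite IHd by (intros; apply H; lia). rewrite H by lia. auto. Qed.

Lemma fsumC_lin d a b u v : fsumC d (fun j => Cplus (Cmult u (a j)) (Cmult v (b j))) =
  Cplus (Cmult u (fsumC d a)) (Cmult v (fsumC d b)).
Proof. induction d; simpl. Ceq. rewrite IHd. Ceq. Qed.

Lemma fsumC_zero d a : (forall j, (j < d)%nat -> a j = RtoC 0) -> fsumC d a = RtoC 0.
Proof. induction d; simpl; intros; auto. rewrite IHd by (intros; apply H; lia). rewrite H by lia. Ceq. Qed.

Lemma fsumC_scal d a u : fsumC d (fun j => Cmult u (a j)) = Cmult u (fsumC d a).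
Proof. induction d; simpl. Ceq. rewrite IHd. Ceq. Qed.

Lemma fsumC_plus d a b : fsumC d (fun j => Cplus (a j) (b j)) = Cplus (fsumC d a) (fsumC d b).
Proof. induction d; simpl. Ceq. rewrite IHd. Ceq. Qed.

Lemma fsumC_swap n m (A : nat -> nat -> C) :
  fsumC n (fun i => fsumC m (fun k => A i k)) = fsumC m (fun k => fsumC n (fun i => A i k)).
Proof. induction n; simpl. symmetry; apply fsumC_zero; auto. rewrite IHn, <- fsumC_plus. auto. Qed.

Lemma fsumC_front n a : fsumC (S n) a = Cplus (a 0%nat) (fsumC n (fun i => a (S i))).
Proof. induction n. simpl. Ceq.
  change (fsumC (S (S n)) a) with (Cplus (fsumC (S n) a) (a (S n))). rewrite IHn.
  change (fsumC (S n) (fun i => a (S i))) with (Cplus (fsumC n (fun i => a (S i))) (a (S n))). Ceq. Qed.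

Lemma Re_fsumC d a : Re (fsumC d a) = fsumR d (fun j => Re (a j)).
Proof. induction d; simpl; auto. rewrite <- IHd. auto. Qed.
Lemma Im_fsumC d a : Im (fsumC d a) = fsumR d (fun j => Im (a j)).
Proof. induction d; simpl; auto. rewrite <- IHd. auto. Qed.

Lemma fsumR_ext d a b : (forall j, (j < d)%nat -> a j = b j) -> fsumR d a = fsumR d b.
Proof. induction d; intros; auto. cbn [fsumR]. rewrite IHd by (intros; apply H; lia). rewrite H by lia. auto. Qed.

Lemma fsumR_le d a b : (forall j, (j < d)%nat -> a j <= b j) -> fsumR d a <= fsumR d b.
Proof. induction d; simpl; intros. lra. assert (a d <= b d) by (apply H; lia).
  assert (fsumR d a <= fsumR d b) by (apply IHd; intros; apply H; lia). lra. Qed.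
Lemma fsumR_plus d a b : fsumR d (fun j => a j + b j) = fsumR d a + fsumR d b.
Proof. induction d; simpl. lra. rewrite IHd. lra. Qed.
Lemma fsumR_scal d a u : fsumR d (fun j => u * a j) = u * fsumR d a.
Proof. induction d; simpl. lra. rewrite IHd. lra. Qed.
Lemma fsumR_nonneg d a : (forall j, (j < d)%nat -> 0 <= a j) -> 0 <= fsumR d a.
Proof. intros. apply Rle_trans with (fsumR d (fun _ => 0)).
  clear; induction d; simpl; lra. apply fsumR_le; auto. Qed.
Lemma fsumR_abs d a : Rabs (fsumR d a) <= fsumR d (fun j => Rabs (a j)).
Proof. induction d; simpl. rewrite Rabs_R0; lra.
  eapply Rle_trans. apply Rabs_triang. lra. Qed.
Lemma fsumR_zero_each d a : (forall j, (j < d)%nat -> 0 <= a j) -> fsumR d a = 0 ->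
  forall j, (j < d)%nat -> a j = 0.
Proof. induction d; simpl; intros. lia.
  assert (0 <= fsumR d a) by (apply fsumR_nonneg; intros; apply H; lia).
  assert (0 <= a d) by (apply H; lia).
  assert (a d = 0) by lra. assert (fsumR d a = 0) by lra.
  destruct (Nat.eq_dec j d). subst; auto. apply IHd. intros; apply H; lia. auto. lia. Qed.

Definition sq (z : C) : R := fst z ^ 2 + snd z ^ 2.
Lemma Cmod2 z : Cmod z ^ 2 = sq z.
Proof. unfold Cmod, sq. apply pow2_sqrt. nra. Qed.
Lemma sq_nonneg z : 0 <= sq z.
Proof. unfold sq; nra. Qed.
Lemma sq0 z : sq z = 0 -> z = RtoC 0.
Proof. unfold sq; intros. destruct z as [a b]; simpl in *.
  assert (a = 0) by nra. assert (b = 0) by nra. subst. auto. Qed.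
Lemma sqn_eq d f n : sqn d f n = fsumR d (fun j => sq (f n j)).
Proof. unfold sqn. apply fsumR_ext. intros; apply Cmod2. Qed.
Definition vlin (a : C) (f : seqv) (b : C) (g : seqv) : seqv :=
  fun n j => Cplus (Cmult a (f n j)) (Cmult b (g n j)).

Lemma exR_ext (u v : nat -> R) : (forall k, u k = v k) -> ex_series u -> ex_series v.
Proof. intros. apply (ex_series_ext u v); auto. Qed.

Lemma exR_scal c u : ex_series u -> ex_series (fun k => c * u k).
Proof. intros. apply (ex_series_scal_l c u H). Qed.
Lemma exR_plus u v : ex_series u -> ex_series v -> ex_series (fun k => u k + v k).
Proof. intros. apply (ex_series_plus u v H H0). Qed.

Lemma Series_lin2 a b u v : ex_series u -> ex_series v ->
  ex_series (fun k => a * u k + b * v k) /\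
  Series (fun k => a * u k + b * v k) = a * Series u + b * Series v.
Proof. intros. split. apply exR_plus; apply exR_scal; auto.
  rewrite Series_plus by (apply exR_scal; auto). rewrite !Series_scal_l. auto. Qed.

Lemma Series_lin4 a b c d u v w x : ex_series u -> ex_series v -> ex_series w -> ex_series x ->
  ex_series (fun k => a * u k + b * v k + (c * w k + d * x k)) /\
  Series (fun k => a * u k + b * v k + (c * w k + d * x k)) =
    a * Series u + b * Series v + (c * Series w + d * Series x).
Proof. intros. destruct (Series_lin2 a b u v) as [E1 S1]; auto.
  destruct (Series_lin2 c d w x) as [E2 S2]; auto. split. apply exR_plus; auto.
  rewrite Series_plus; auto. rewrite S1, S2; auto. Qed.

Lemma zsum_lin a b x y : zsummable x -> zsummable y ->
  zsummable (fun n => Cplus (Cmult a (x n)) (Cmult b (y n))) /\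
  zsum (fun n => Cplus (Cmult a (x n)) (Cmult b (y n))) = Cplus (Cmult a (zsum x)) (Cmult b (zsum y)).
Proof. intros [Xr Xi] [Yr Yi].
  assert (HR : forall k, Re (zterm (fun n => Cplus (Cmult a (x n)) (Cmult b (y n))) k) =
     fst a * Re (zterm x k) + (- snd a) * Im (zterm x k) + (fst b * Re (zterm y k) + (- snd b) * Im (zterm y k))).
  { intros; unfold zterm, Re, Im, Cplus, Cmult; simpl; ring. }
  assert (HI : forall k, Im (zterm (fun n => Cplus (Cmult a (x n)) (Cmult b (y n))) k) =
     fst a * Im (zterm x k) + snd a * Re (zterm x k) + (fst b * Im (zterm y k) + snd b * Re (zterm y k))).
  { intros; unfold zterm, Re, Im, Cplus, Cmult; simpl; ring. }
  destruct (Series_lin4 (fst a) (- snd a) (fst b) (- snd b) _ _ _ _ Xr Xi Yr Yi) as [E1 S1].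
  destruct (Series_lin4 (fst a) (snd a) (fst b) (snd b) _ _ _ _ Xi Xr Yi Yr) as [E2 S2].
  split. split. eapply ex_series_ext; [|exact E1]. intros; rewrite HR; reflexivity.
  eapply ex_series_ext; [|exact E2]. intros; rewrite HI; reflexivity.
  unfold zsum. rewrite (Series_ext (fun k => Re (zterm (fun n => Cplus (Cmult a (x n)) (Cmult b (y n))) k)) _ HR).
  rewrite (Series_ext (fun k => Im (zterm (fun n => Cplus (Cmult a (x n)) (Cmult b (y n))) k)) _ HI), S1, S2.
  unfold Cplus, Cmult; simpl. apply injective_projections; simpl; ring. Qed.

Lemma Series_zero : Series (fun _ => 0) = 0.
Proof. rewrite (Series_ext (fun _ => 0) (fun n => 0 * (fun _ => 0) n)).
  rewrite Series_scal_l. ring. intros; simpl; ring. Qed.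

Lemma zsum_zero a : (forall n, a n = RtoC 0) -> zsum a = RtoC 0.
Proof. intros. unfold zsum.
  rewrite (Series_ext _ (fun _ => 0)), (Series_ext (fun k => Im (zterm a k)) (fun _ => 0)), Series_zero; auto.
  intros; unfold zterm; rewrite !H; simpl; ring. intros; unfold zterm; rewrite !H; simpl; ring. Qed.
Definition T2 d f (k : nat) := sqn d f (Z.of_nat k) + sqn d f (- Z.of_nat k - 1)%Z.

Lemma sqn_nonneg d f n : 0 <= sqn d f n.
Proof. rewrite sqn_eq. apply fsumR_nonneg. intros; apply sq_nonneg. Qed.

Lemma fsumR_zero d : fsumR d (fun _ => 0) = 0.
Proof. induction d; simpl; auto. rewrite IHd; ring. Qed.
Lemma sqn_zero_pt d f n : (forall j, f n j = RtoC 0) -> sqn d f n = 0.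
Proof. intros. rewrite sqn_eq. rewrite <- (fsumR_zero d). apply fsumR_ext. intros; rewrite H.
  unfold sq; simpl; ring. Qed.

Lemma exR_le u v : (forall k, 0 <= u k <= v k) -> ex_series v -> ex_series u.
Proof. intros. apply (ex_series_le u v); auto. intros. specialize (H n).
  change (norm (u n)) with (Rabs (u n)). rewrite Rabs_pos_eq; lra. Qed.

Lemma L2_gen d f g h K : (forall n j, (d <= j)%nat -> h n j = RtoC 0) ->
  (forall n j, sq (h n j) <= K * (sq (f n j) + sq (g n j))) -> L2 d f -> L2 d g -> L2 d h.
Proof. intros Hz Hb [_ Ef] [_ Eg]. split; auto.
  apply exR_le with (fun k => K * (T2 d f k + T2 d g k)).
  - intros k. split. pose proof (sqn_nonneg d h (Z.of_nat k)); pose proof (sqn_nonneg d h (- Z.of_nat k - 1)%Z); lra.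
    unfold T2. rewrite !sqn_eq.
    assert (forall n, fsumR d (fun j => sq (h n j)) <= K * (fsumR d (fun j => sq (f n j)) + fsumR d (fun j => sq (g n j)))).
    { intros. rewrite <- fsumR_plus, <- fsumR_scal. apply fsumR_le. intros; apply Hb. }
    pose proof (H (Z.of_nat k)); pose proof (H (- Z.of_nat k - 1)%Z). lra.
  - apply exR_scal. apply exR_plus; auto. Qed.

Lemma ex_series_R0 : ex_series (fun _ : nat => 0%R).
Proof. apply ex_series_Reals_1. exists 0. intros e He. exists 0%nat. intros. rewrite sum_cte.
  unfold R_dist. rewrite Rmult_0_l, Rminus_0_r, Rabs_R0. auto. Qed.

Lemma L2_zero d : L2 d vzero.
Proof. split. intros; reflexivity. apply ex_series_ext with (fun _ => 0%R).
  intros. rewrite !sqn_zero_pt by (intros; reflexivity). apply eq_sym, Rplus_0_r.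
  apply ex_series_R0. Qed.

Lemma sq_lin_R a1 a2 b1 b2 x1 x2 y1 y2 :
  (a1 * x1 - a2 * x2 + (b1 * y1 - b2 * y2)) ^ 2 + (a1 * x2 + a2 * x1 + (b1 * y2 + b2 * y1)) ^ 2 <=
  2 * (a1 ^ 2 + a2 ^ 2 + (b1 ^ 2 + b2 ^ 2)) * (x1 ^ 2 + x2 ^ 2 + (y1 ^ 2 + y2 ^ 2)).
Proof.
  set (u1 := a1 * x1 - a2 * x2); set (u2 := a1 * x2 + a2 * x1);
  set (v1 := b1 * y1 - b2 * y2); set (v2 := b1 * y2 + b2 * y1).
  assert (E1 : u1 ^ 2 + u2 ^ 2 = (a1 ^ 2 + a2 ^ 2) * (x1 ^ 2 + x2 ^ 2)) by (unfold u1, u2; ring).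
  assert (E2 : v1 ^ 2 + v2 ^ 2 = (b1 ^ 2 + b2 ^ 2) * (y1 ^ 2 + y2 ^ 2)) by (unfold v1, v2; ring).
  clearbody u1 u2 v1 v2.
  assert (I1 : (u1 + v1) ^ 2 + (u2 + v2) ^ 2 <= 2 * (u1 ^ 2 + u2 ^ 2 + (v1 ^ 2 + v2 ^ 2))).
  { pose proof (pow2_ge_0 (u1 - v1)); pose proof (pow2_ge_0 (u2 - v2)). nra. }
  assert (HA : 0 <= a1 ^ 2 + a2 ^ 2) by nra. assert (HB : 0 <= b1 ^ 2 + b2 ^ 2) by nra.
  assert (HX : 0 <= x1 ^ 2 + x2 ^ 2) by nra. assert (HY : 0 <= y1 ^ 2 + y2 ^ 2) by nra.
  rewrite E1, E2 in I1. pose proof (Rmult_le_pos _ _ HA HY). pose proof (Rmult_le_pos _ _ HB HX).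
  revert I1 H H0. generalize (a1 ^ 2 + a2 ^ 2) (b1 ^ 2 + b2 ^ 2) (x1 ^ 2 + x2 ^ 2) (y1 ^ 2 + y2 ^ 2).
  intros. nra. Qed.

Lemma sq_lin a b x y : sq (Cplus (Cmult a x) (Cmult b y)) <= (2 * (sq a + sq b)) * (sq x + sq y).
Proof. destruct a as [a1 a2]; destruct b as [b1 b2]; destruct x as [x1 x2];
  destruct y as [y1 y2]; unfold sq, Cplus, Cmult; simpl. apply sq_lin_R. Qed.

Lemma L2_lin d a b f g : L2 d f -> L2 d g -> L2 d (vlin a f b g).
Proof. intros Hf Hg. apply L2_gen with f g (2 * (sq a + sq b)); auto.
  intros. unfold vlin. rewrite (proj1 Hf), (proj1 Hg); auto. Ceq. intros; apply sq_lin. Qed.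

Lemma H2_lin d a b f g : H2 d f -> H2 d g -> H2 d (vlin a f b g).
Proof. intros [Hf Hf'] [Hg Hg']. split. apply L2_lin; auto. intros. unfold vlin. rewrite Hf', Hg'; auto. Ceq. Qed.

Lemma H2_zero d : H2 d vzero.
Proof. split. apply L2_zero. intros; reflexivity. Qed.

Lemma vadd_lin f g : vadd f g = vlin (RtoC 1) f (RtoC 1) g.
Proof. extensionality n; extensionality j. unfold vadd, vlin. Ceq. Qed.
Lemma vscal_lin c f : vscal c f = vlin c f (RtoC 0) f.
Proof. extensionality n; extensionality j. unfold vscal, vlin. Ceq. Qed.
Lemma vsub_lin f g : vsub f g = vlin (RtoC 1) f (RtoC (-1)) g.
Proof. extensionality n; extensionality j. unfold vsub, vlin. Ceq. Qed.

Lemma lincomb_pt m c b n j : lincomb m c b n j = fsumC m (fun k => Cmult (c k) (b k n j)).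
Proof. induction m; simpl. reflexivity. unfold vadd, vscal. rewrite IHm. reflexivity. Qed.

Lemma lincomb_closed (P : seqv -> Prop) : P vzero -> (forall a b f g, P f -> P g -> P (vlin a f b g)) ->
  forall m c b, (forall k, (k < m)%nat -> P (b k)) -> P (lincomb m c b).
Proof. intros. induction m; simpl; auto. rewrite vadd_lin. apply H0. apply IHm; intros; apply H1; lia.
  rewrite vscal_lin. apply H0; apply H1; lia. Qed.

Lemma Pm_L2 d f : L2 d f -> L2 d (Pm f).
Proof. intros Hf. apply L2_gen with f f 1; auto. intros; unfold Pm. destruct (n <? 0)%Z; auto.
  apply Hf; auto. intros; unfold Pm. destruct (n <? 0)%Z. pose proof (sq_nonneg (f n j)); lra.
  unfold sq at 1; simpl. pose proof (sq_nonneg (f n j)); nra. Qed.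
Section Hk.
Variables (q p : nat) (g : msym).
Hypothesis hG : Linf q p g.

Lemma Gterm_lin a b f h m i : Gterm p g (vlin a f b h) m i =
  fun n => Cplus (Cmult a (Gterm p g f m i n)) (Cmult b (Gterm p g h m i n)).
Proof. extensionality n. unfold Gterm, vlin. rewrite <- fsumC_lin. apply fsumC_ext. intros. Ceq. Qed.

Lemma Gmul_lin a b f h : L2 p f -> L2 p h -> Gmul p g (vlin a f b h) = vlin a (Gmul p g f) b (Gmul p g h).
Proof. intros Hf Hh. destruct hG as [_ [M HM]]. extensionality m; extensionality i.
  unfold Gmul. rewrite Gterm_lin. unfold vlin. apply zsum_lin. apply (HM f Hf). apply (HM h Hh). Qed.

Lemma Pm_lin a b f h : Pm (vlin a f b h) = vlin a (Pm f) b (Pm h).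
Proof. extensionality n; extensionality j. unfold Pm, vlin. destruct (n <? 0)%Z; auto. Ceq. Qed.

Lemma Hank_lin a b f h : L2 p f -> L2 p h -> Hank p g (vlin a f b h) = vlin a (Hank p g f) b (Hank p g h).
Proof. intros. unfold Hank. rewrite Gmul_lin; auto. apply Pm_lin. Qed.

Lemma Hank_zero : Hank p g vzero = vzero.
Proof. extensionality n; extensionality j. unfold Hank, Pm, Gmul. destruct (n <? 0)%Z; auto.
  apply zsum_zero. intros. unfold Gterm, vzero. apply fsumC_zero. intros. Ceq. Qed.

Lemma Hank_L2 f : L2 p f -> L2 q (Hank p g f).
Proof. intros. destruct hG as [_ [M HM]]. apply Pm_L2. apply (HM f H). Qed.
End Hk.

Lemma zsummable_bound a B : (forall n, Rabs (Re (a n)) <= B n /\ Rabs (Im (a n)) <= B n) ->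
  ex_series (fun k => B (Z.of_nat k) + B (- Z.of_nat k - 1)%Z) -> zsummable a.
Proof. intros HB E. split; apply ex_series_Rabs; apply exR_le with (fun k => B (Z.of_nat k) + B (- Z.of_nat k - 1)%Z); auto;
  intros k; split; try apply Rabs_pos; unfold zterm; simpl;
  [pose proof (Rabs_triang (Re (a (Z.of_nat k))) (Re (a (- Z.of_nat k - 1)%Z)))
  |pose proof (Rabs_triang (Im (a (Z.of_nat k))) (Im (a (- Z.of_nat k - 1)%Z)))];
  pose proof (HB (Z.of_nat k)); pose proof (HB (- Z.of_nat k - 1)%Z); unfold Re, Im in *; lra. Qed.

Definition ipt d (f h : seqv) (n : Z) : C := fsumC d (fun j => Cmult (f n j) (Cconj (h n j))).

Lemma ip_summable d f h : L2 d f -> L2 d h -> zsummable (ipt d f h).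
Proof. intros Hf Hh. apply zsummable_bound with (fun n => sqn d f n + sqn d h n).
  - intros n. unfold ipt. rewrite Re_fsumC, Im_fsumC, !sqn_eq, <- fsumR_plus.
    split; (eapply Rle_trans; [apply fsumR_abs|]); apply fsumR_le; intros;
    unfold sq, Re, Im, Cmult, Cconj; simpl; destruct (f n j) as [x1 x2]; destruct (h n j) as [y1 y2]; simpl;
    apply Rabs_le; pose proof (pow2_ge_0 (x1 + y1)); pose proof (pow2_ge_0 (x1 - y1));
    pose proof (pow2_ge_0 (x2 + y2)); pose proof (pow2_ge_0 (x2 - y2));
    pose proof (pow2_ge_0 (x1 + y2)); pose proof (pow2_ge_0 (x1 - y2));
    pose proof (pow2_ge_0 (x2 + y1)); pose proof (pow2_ge_0 (x2 - y1)); split; nra.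
  - apply exR_ext with (fun k => T2 d f k + T2 d h k). intros; unfold T2; ring.
    apply exR_plus. apply Hf. apply Hh. Qed.

Lemma ip_lin d a b f g h : L2 d f -> L2 d g -> L2 d h ->
  ip d (vlin a f b g) h = Cplus (Cmult a (ip d f h)) (Cmult b (ip d g h)).
Proof. intros. unfold ip. 
  replace (fun n => fsumC d (fun j => Cmult (vlin a f b g n j) (Cconj (h n j)))) with
    (fun n => Cplus (Cmult a (ipt d f h n)) (Cmult b (ipt d g h n))).
  apply zsum_lin; apply ip_summable; auto.
  extensionality n. unfold ipt, vlin. rewrite <- fsumC_lin. apply fsumC_ext; intros; Ceq. Qed.

Lemma ip_zero_l d h : ip d vzero h = RtoC 0.
Proof. unfold ip. apply zsum_zero. intros; apply fsumC_zero. intros; unfold vzero; Ceq. Qed.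

Lemma sum_f_R0_ge u k : (forall i, 0 <= u i) -> u k <= sum_f_R0 u k.
Proof. intros. destruct k; simpl. lra. pose proof (cond_pos_sum u k H). lra. Qed.

Lemma Series_nonneg_zero u : ex_series u -> (forall k, 0 <= u k) -> Series u = 0 -> forall k, u k = 0.
Proof. intros E P S0 k. rewrite (Series_incr_n u (S k)) in S0 by (auto; lia). simpl pred in S0.
  assert (0 <= Series (fun i => u (S k + i)%nat)).
  { rewrite <- Series_zero. apply Series_le. intros; split; auto; lra.
    apply (ex_series_incr_n u (S k)); auto. }
  pose proof (sum_f_R0_ge u k P). pose proof (P k). pose proof (cond_pos_sum u k P). lra. Qed.

Lemma ip_self d w : L2 d w -> ip d w w = RtoC 0 -> w = vzero.
Proof. intros Hw H0. assert (R0 : Series (T2 d w) = 0).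
  { apply (f_equal fst) in H0. unfold ip, zsum in H0. simpl in H0. rewrite <- H0. apply Series_ext. intros k.
    unfold T2, zterm. rewrite !sqn_eq. simpl. fold (Re (fsumC d (fun j => Cmult (w (Z.of_nat k) j) (Cconj (w (Z.of_nat k) j))))).
    fold (Re (fsumC d (fun j => Cmult (w (- Z.of_nat k - 1)%Z j) (Cconj (w (- Z.of_nat k - 1)%Z j))))).
    rewrite !Re_fsumC. f_equal; apply fsumR_ext; intros; unfold sq, Re, Cmult, Cconj; simpl; ring. }
  assert (T0 := Series_nonneg_zero _ (proj2 Hw) (fun k => Rplus_le_le_0_compat _ _ (sqn_nonneg _ _ _) (sqn_nonneg _ _ _)) R0).
  assert (Sn : forall n, sqn d w n = 0).
  { intros n. destruct (Z_lt_le_dec n 0).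
    - specialize (T0 (Z.to_nat (- n - 1))). unfold T2 in T0. rewrite Z2Nat.id in T0 by lia.
      replace (- (- n - 1) - 1)%Z with n in T0 by lia.
      pose proof (sqn_nonneg d w n); pose proof (sqn_nonneg d w (- n - 1)%Z). lra.
    - specialize (T0 (Z.to_nat n)). unfold T2 in T0. rewrite Z2Nat.id in T0 by lia.
      pose proof (sqn_nonneg d w n); pose proof (sqn_nonneg d w (- n - 1)%Z). lra. }
  extensionality n; extensionality j. destruct (le_lt_dec d j). apply Hw; auto.
  specialize (Sn n). rewrite sqn_eq in Sn. apply sq0. apply (fsumR_zero_each d (fun j => sq (w n j))); auto.
  intros; apply sq_nonneg. Qed.
Lemma zsum_pos a : (forall m, (m < 0)%Z -> a m = RtoC 0) ->
  zsum a = (Series (fun k => Re (a (Z.of_nat k))), Series (fun k => Im (a (Z.of_nat k)))).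
Proof. intros. unfold zsum. f_equal; apply Series_ext; intros; unfold zterm; rewrite (H (- Z.of_nat n - 1)%Z) by lia;
  unfold Re, Im, Cplus; simpl; ring. Qed.

Lemma zsum_shift a b : (forall m, (m < 0)%Z -> a m = RtoC 0) -> (forall m, (m < 0)%Z -> b m = RtoC 0) ->
  b 0%Z = RtoC 0 -> (forall k, b (Z.of_nat (S k)) = a (Z.of_nat k)) -> zsum b = zsum a.
Proof. intros. rewrite (zsum_pos a), (zsum_pos b); auto. f_equal.
  rewrite Series_incr_1_aux. apply Series_ext; intros; rewrite H2; auto. simpl; rewrite H1; auto.
  rewrite Series_incr_1_aux. apply Series_ext; intros; rewrite H2; auto. simpl; rewrite H1; auto. Qed.

Lemma H2_shift d f : H2 d f -> H2 d (Sh f).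
Proof. intros [[Hz E] Hn]. assert (Hneg : forall n, (n < 0)%Z -> sqn d f n = 0).
  { intros; apply sqn_zero_pt; intros; apply Hn; auto. }
  split. split. intros; unfold Sh, Vmul; apply Hz; auto.
  apply (ex_series_incr_1 (fun k => sqn d (Sh f) (Z.of_nat k) + sqn d (Sh f) (- Z.of_nat k - 1)%Z)).
  apply exR_ext with (T2 d f); auto. intros k. unfold T2.
  rewrite (Hneg (- Z.of_nat k - 1)%Z) by lia. rewrite (sqn_zero_pt d (Sh f) (- Z.of_nat (S k) - 1)%Z).
  replace (sqn d (Sh f) (Z.of_nat (S k))) with (sqn d f (Z.of_nat k)). ring.
  unfold sqn, Sh, Vmul. f_equal. extensionality j. f_equal. f_equal. f_equal. lia.
  intros; unfold Sh, Vmul; apply Hn; lia.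
  intros; unfold Sh, Vmul; apply Hn; lia. Qed.

Lemma ip_shift d f h : H2 d f -> ip d (Sh f) h = ip d f (Sadj h).
Proof. intros [_ Hn]. unfold ip. apply zsum_shift.
  - intros; apply fsumC_zero; intros; rewrite Hn; auto. Ceq.
  - intros; apply fsumC_zero; intros; unfold Sh, Vmul; rewrite Hn by lia. Ceq.
  - apply fsumC_zero; intros; unfold Sh, Vmul; rewrite Hn by lia. Ceq.
  - intros k. apply fsumC_ext. intros. unfold Sh, Vmul, Sadj.
    replace (Z.of_nat (S k) - 1)%Z with (Z.of_nat k) by lia.
    replace (Z.of_nat k <? 0)%Z with false by (symmetry; apply Z.ltb_ge; lia).
    replace (Z.of_nat k + 1)%Z with (Z.of_nat (S k)) by lia. auto. Qed.

Lemma Hank_shift p g f : H2 p f -> Vm (Hank p g f) = Hank p g (Sh f).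
Proof. intros [_ Hn]. extensionality n; extensionality i. unfold Vm, Hank, Pm, Vmul.
  destruct (Z.ltb_spec n 0); auto. replace ((n - 1) <? 0)%Z with true by (symmetry; apply Z.ltb_lt; lia).
  unfold Gmul. symmetry. apply zsum_shift.
  - intros; unfold Gterm; apply fsumC_zero; intros; rewrite Hn; auto. Ceq.
  - intros; unfold Gterm; apply fsumC_zero; intros; unfold Sh, Vmul; rewrite Hn by lia. Ceq.
  - unfold Gterm; apply fsumC_zero; intros; unfold Sh, Vmul; rewrite Hn by lia. Ceq.
  - intros k. unfold Gterm, Sh, Vmul. apply fsumC_ext. intros.
    replace (Z.of_nat (S k) - 1)%Z with (Z.of_nat k) by lia.
    replace (n - Z.of_nat (S k))%Z with (n - 1 - Z.of_nat k)%Z by lia. auto. Qed.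
Lemma C10 : RtoC 1 <> RtoC 0.
Proof. intro H. injection H. lra. Qed.

Lemma steinitz n : forall (l : list (nat -> C)), (length l < n)%nat ->
  exists a : nat -> C, (exists i, (i < n)%nat /\ a i <> RtoC 0) /\
    forall col, In col l -> fsumC n (fun i => Cmult (a i) (col i)) = RtoC 0.
Proof. induction n; intros l Hl. lia.
  destruct (classic (exists k, In k l /\ k n <> RtoC 0)) as [[k [Hk Hkn]] | Hno].
  - destruct (in_split k l Hk) as [l1 [l2 El]]. subst l.
    set (t := Cinv (k n)).
    assert (Ht : Cmult t (k n) = RtoC 1) by (apply Cinv_l; auto).
    destruct (IHn (map (fun col => fun i => Cminus (col i) (Cmult (Cmult (col n) t) (k i))) (l1 ++ l2))) as [a' [[i0 [Hi0 Ha0]] Ha']].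
    { rewrite length_map, length_app. rewrite length_app in Hl. simpl in Hl. lia. }
    set (Sk := fsumC n (fun i => Cmult (a' i) (k i))).
    exists (fun i => if Nat.ltb i n then a' i else Cmult (Copp Sk) t). split.
    + exists i0. split. lia. replace (i0 <? n)%nat with true by (symmetry; apply Nat.ltb_lt; lia). auto.
    + intros col Hcol. cbn [fsumC]. replace (n <? n)%nat with false by (symmetry; apply Nat.ltb_ge; lia).
      rewrite (fsumC_ext n _ (fun i => Cmult (a' i) (col i))) by (intros; replace (j <? n)%nat with true by (symmetry; apply Nat.ltb_lt; lia); auto).
      assert (Hgen : forall col, In col (l1 ++ l2) ->
        Cplus (fsumC n (fun i => Cmult (a' i) (col i))) (Cmult (Cmult (Copp Sk) t) (col n)) = RtoC 0).
      { intros c Hc'. pose proof (Ha' _ (in_map (fun col => fun i => Cminus (col i) (Cmult (Cmult (col n) t) (k i))) _ _ Hc')) as HH.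
        simpl in HH.
        rewrite (fsumC_ext n _ (fun i => Cplus (Cmult (RtoC 1) (Cmult (a' i) (c i))) (Cmult (Copp (Cmult (c n) t)) (Cmult (a' i) (k i))))) in HH by (intros; Ceq).
        rewrite fsumC_lin in HH. fold Sk in HH.
        set (X := fsumC n (fun i => Cmult (a' i) (c i))) in *.
        replace X with (Cminus (Cplus (Cmult (RtoC 1) X) (Cmult (Copp (Cmult (c n) t)) Sk)) (Cmult (Copp (Cmult (c n) t)) Sk)) by Ceq.
        rewrite HH. Ceq. }
      apply in_app_or in Hcol. destruct Hcol as [Hc | [Hc | Hc]].
      * apply Hgen, in_or_app; auto.
      * subst col. fold Sk. replace (Cmult (Cmult (Copp Sk) t) (k n)) with (Copp (Cmult Sk (Cmult t (k n)))) by Ceq.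
        rewrite Ht. Ceq.
      * apply Hgen, in_or_app; auto.
  - exists (fun i => if Nat.eqb i n then RtoC 1 else RtoC 0). split.
    + exists n. split. lia. rewrite Nat.eqb_refl. apply C10.
    + intros col Hcol. cbn [fsumC]. rewrite Nat.eqb_refl.
      rewrite fsumC_zero. assert (col n = RtoC 0). { apply NNPP; intro; apply Hno; exists col; auto. }
      rewrite H. Ceq.
      intros. replace (j =? n)%nat with false by (symmetry; apply Nat.eqb_neq; lia). Ceq. Qed.

Lemma dependent m (b v : nat -> seqv) : (forall i, (i <= m)%nat -> exists c, v i = lincomb m c b) ->
  exists a, (exists i, (i < S m)%nat /\ a i <> RtoC 0) /\ lincomb (S m) a v = vzero.
Proof. intros H. destruct (functional_choice (fun (i : nat) (c : nat -> C) => (i <= m)%nat -> v i = lincomb m c b)) as [F HF].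
  { intros i. destruct (le_lt_dec i m). destruct (H i l) as [c Hc]. exists c; auto.
    exists (fun _ => RtoC 0). intros; lia. }
  destruct (steinitz (S m) (map (fun k => fun i => F i k) (seq 0 m))) as [a [Hnz Ha]].
  { rewrite length_map, length_seq. lia. }
  exists a. split; auto. extensionality n; extensionality j. rewrite lincomb_pt.
  rewrite (fsumC_ext (S m) _ (fun i => fsumC m (fun k => Cmult (a i) (Cmult (F i k) (b k n j))))).
  rewrite fsumC_swap. apply fsumC_zero. intros k Hk.
  assert (Hin : In (fun i => F i k) (map (fun k => fun i => F i k) (seq 0 m))).
  { apply in_map_iff. exists k. split; auto. apply in_seq. lia. }
  specialize (Ha _ Hin).
  assert (E : fsumC (S m) (fun i => Cmult (a i) (Cmult (F i k) (b k n j))) =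
    Cmult (b k n j) (fsumC (S m) (fun i => Cmult (a i) (F i k)))).
  { rewrite <- fsumC_scal. apply fsumC_ext. intros; Ceq. }
  rewrite E, Ha. Ceq.
  intros i Hi. rewrite HF by lia. rewrite lincomb_pt. rewrite fsumC_scal. auto. Qed.

Lemma lincomb_front n c b : lincomb (S n) c b = vadd (vscal (c 0%nat) (b 0%nat)) (lincomb n (fun i => c (S i)) (fun i => b (S i))).
Proof. extensionality x; extensionality j. rewrite lincomb_pt. unfold vadd, vscal. rewrite lincomb_pt.
  rewrite fsumC_front. auto. Qed.

Section Dep.
Variables (Y XX : seqv -> Prop) (U Rl : seqv -> seqv).
Hypothesis HYX : forall x, Y x -> XX x.
Hypothesis HYlin : forall a b x y, Y x -> Y y -> Y (vlin a x b y).
Hypothesis HY0 : Y vzero.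
Hypothesis HXX0 : XX vzero.
Hypothesis HUlin : forall a b x y, U (vlin a x b y) = vlin a (U x) b (U y).
Hypothesis HUY : forall x, Y x -> Y (U x).
Hypothesis HRl : forall x, XX x -> Rl (U x) = x.

Lemma U0 : U vzero = vzero.
Proof. replace vzero with (vlin (RtoC 0) vzero (RtoC 0) vzero). rewrite HUlin.
  extensionality n; extensionality j; unfold vlin, vzero; Ceq.
  extensionality n; extensionality j; unfold vlin, vzero; Ceq. Qed.

Lemma U_lincomb n c w : U (lincomb n c w) = lincomb n c (fun i => U (w i)).
Proof. induction n; simpl. apply U0. rewrite !vadd_lin, !vscal_lin, !HUlin, IHn. auto. Qed.

Lemma iter_Y y i : Y y -> Y (Nat.iter i U y).
Proof. intros; induction i; simpl; auto. Qed.

Lemma dep_Rl n : forall a y, Y y -> (exists i, (i < n)%nat /\ a i <> RtoC 0) ->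
  lincomb n a (fun i => Nat.iter i U y) = vzero -> Y (Rl y).
Proof. induction n; intros a y Hy [i [Hi Ha]] Hl. lia.
  rewrite lincomb_front in Hl. simpl in Hl.
  set (z := lincomb n (fun i => a (S i)) (fun i => Nat.iter i U y)).
  assert (Ez : lincomb n (fun i => a (S i)) (fun i => U (Nat.iter i U y)) = U z) by (unfold z; rewrite U_lincomb; auto).
  rewrite Ez in Hl.
  assert (Yz : Y z). { unfold z. apply lincomb_closed; auto. intros; apply iter_Y; auto. }
  assert (Hpt : forall x j, U z x j = Copp (Cmult (a 0%nat) (y x j))).
  { intros. apply (f_equal (fun v => v x j)) in Hl. unfold vadd, vscal, vzero in Hl.
    replace (U z x j) with (Cminus (Cplus (Cmult (a 0%nat) (y x j)) (U z x j)) (Cmult (a 0%nat) (y x j))) by Ceq.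
    rewrite Hl. Ceq. }
  destruct (classic (a 0%nat = RtoC 0)) as [A0 | A0].
  - assert (Uz0 : U z = U vzero).
    { rewrite U0. extensionality x; extensionality j. rewrite Hpt, A0. unfold vzero; Ceq. }
    assert (z = vzero). { rewrite <- (HRl z), <- (HRl vzero); auto. rewrite Uz0. auto. }
    apply (IHn (fun i => a (S i)) y Hy); auto. destruct i. congruence. exists i. split; auto. lia.
  - set (w := vlin (Copp (Cinv (a 0%nat))) z (RtoC 0) z).
    assert (Uw : U w = y).
    { unfold w. rewrite HUlin. extensionality x; extensionality j. unfold vlin. rewrite Hpt.
      replace (Cplus (Cmult (Copp (Cinv (a 0%nat))) (Copp (Cmult (a 0%nat) (y x j)))) (Cmult (RtoC 0) (Copp (Cmult (a 0%nat) (y x j)))))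
        with (Cmult (Cmult (Cinv (a 0%nat)) (a 0%nat)) (y x j)) by Ceq.
      rewrite Cinv_l; auto. Ceq. }
    rewrite <- Uw. rewrite HRl. unfold w; apply HYlin; auto. apply HYX. unfold w; apply HYlin; auto. Qed.
End Dep.
Lemma Vm_lin a b x y : Vm (vlin a x b y) = vlin a (Vm x) b (Vm y).
Proof. extensionality n; extensionality j. unfold Vm, Pm, Vmul, vlin. destruct (n <? 0)%Z; auto. Ceq. Qed.

Lemma Ures_lin l a b x y : (fun x => vsub (Vm x) (vscal l x)) (vlin a x b y) =
  vlin a ((fun x => vsub (Vm x) (vscal l x)) x) b ((fun x => vsub (Vm x) (vscal l x)) y).
Proof. cbv beta. rewrite Vm_lin. extensionality n; extensionality j. unfold vsub, vscal, vlin. Ceq. Qed.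

Lemma Lub_mono (E1 E2 : R -> Prop) : (forall r, E1 r -> E2 r) -> Rbar_le (Lub_Rbar E1) (Lub_Rbar E2).
Proof. intros. destruct (Lub_Rbar_correct E1) as [_ H1]. apply H1.
  intros r Hr. destruct (Lub_Rbar_correct E2) as [H2 _]. apply H2; auto. Qed.

Lemma sub_zero_eq (x y : seqv) : vsub x y = vzero -> x = y.
Proof. intros. extensionality n; extensionality j. apply (f_equal (fun v => v n j)) in H.
  unfold vsub, vzero in H. replace (x n j) with (Cplus (Cminus (x n j) (y n j)) (y n j)) by Ceq.
  rewrite H. Ceq. Qed.

Theorem lemma6p1 (q p : nat) (g : msym)
  (hG : Linf q p g)
  (C1 : finite_rank p g)
  (C2a : forall h, maximizing q p g h -> ~ (exists f, H2 p f /\ h = Sh f))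
  (C2b : span_dim (maximizing q p g) p)
  (M0 : seqv -> Prop) (hM0 : fin_dim_subspace p M0)
  (hSM0 : forall f, M0 f -> M0 (Sadj f))
  (P0 : seqv -> seqv) (hP0 : is_orth_proj p (H2 p) M0 P0)
  (Pi : seqv -> seqv) :
  let X := fun x => exists f, H2 p f /\ x = Hank p g f in
  let M0perp := fun f => H2 p f /\ forall h, M0 h -> ip p f h = RtoC 0 in
  let X0 := fun x => exists f, M0perp f /\ x = Hank p g f in
  is_orth_proj q X X0 Pi ->
  (forall x, X0 x -> X0 (Vm x)) /\
  Rbar_le (rspec q X0 Vm) (rspec q X Vm) /\
  (forall (k : nat) f, H2 p f ->
     Nat.iter k Vm (Hank p g (vsub f (P0 f))) =
     Nat.iter k Vm (Pi (Hank p g (vsub f (P0 f))))).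
Proof.
  intros X M0perp X0 hPi.
  assert (M0H2 : forall h, M0 h -> H2 p h).
  { destruct hM0 as [m [b [Hb HM]]]. intros h Hh. apply HM in Hh. destruct Hh as [c ->].
    apply lincomb_closed; auto. apply H2_zero. intros; apply H2_lin; auto. }
  assert (Plin : forall a b f h, M0perp f -> M0perp h -> M0perp (vlin a f b h)).
  { intros a b f h [Hf Of] [Hh Oh]. split. apply H2_lin; auto. intros k Hk.
    rewrite ip_lin; try apply Hf; try apply Hh; try apply M0H2; auto. rewrite Of, Oh; auto. Ceq. }
  assert (P0z : M0perp vzero). { split. apply H2_zero. intros; apply ip_zero_l. }
  assert (Ylin : forall a b x y, X0 x -> X0 y -> X0 (vlin a x b y)).
  { intros a b x y [f [Hf ->]] [h [Hh ->]]. exists (vlin a f b h). split; auto.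
    rewrite (Hank_lin q p g hG); auto. apply Hf. apply Hh. }
  assert (Y0 : X0 vzero). { exists vzero. split; auto. rewrite Hank_zero; auto. }
  assert (YX : forall x, X0 x -> X x). { intros x [f [[Hf _] ->]]. exists f; auto. }
  assert (XL2 : forall x, X x -> L2 q x). { intros x [f [Hf ->]]. apply (Hank_L2 q p g hG); auto. apply Hf. }
  assert (Inv : forall x, X0 x -> X0 (Vm x)).
  { intros x [f [[Hf Of] ->]]. exists (Sh f). split. split. apply H2_shift; auto.
    intros h Hh. rewrite ip_shift; auto. apply Hank_shift; auto. }
  split; [exact Inv|]. split.
  - unfold rspec. apply Lub_mono. intros r [l [Hl ->]]. exists l. split; auto. intros Hres. apply Hl.
    destruct Hres as [Rl [R1 [R2 R3]]]. exists Rl. split; [|split].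
    + intros y Hy. split; [|apply R1; auto].
      destruct C1 as [m [b Hb]].
      set (U := fun x => vsub (Vm x) (vscal l x)).
      assert (HUY : forall x, X0 x -> X0 (U x)).
      { intros. unfold U. rewrite vsub_lin, vscal_lin. apply Ylin; auto. }
      destruct (dependent m b (fun i => Nat.iter i U y)) as [a [Hnz Ha]].
      { intros i _. assert (X0 (Nat.iter i U y)) by (apply iter_Y; auto).
        destruct (YX _ H) as [f [Hf Ef]]. rewrite Ef. apply Hb; auto. }
      apply (dep_Rl X0 X U Rl) with (S m) a; auto.
      intros; apply Ures_lin.
    + intros x Hx. apply R2; auto.
    + destruct R3 as [M HM]. exists M. intros; apply HM; auto.
  - intros k f Hf.
    set (u := vsub f (P0 f)).
    assert (Mu : M0perp u).
    { destruct (hP0 f Hf) as [HP O]. split. unfold u; rewrite vsub_lin. apply H2_lin; auto.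
      intros h Hh. apply O; auto. }
    set (x := Hank p g u).
    assert (Xx : X0 x) by (exists u; split; auto).
    destruct (hPi x (YX x Xx)) as [XPi OPi].
    assert (Xw : X0 (vsub x (Pi x))) by (rewrite vsub_lin; apply Ylin; auto).
    assert (Ew : vsub x (Pi x) = vzero).
    { apply (ip_self q). apply XL2, YX; auto. apply OPi; auto. }
    apply sub_zero_eq in Ew. rewrite <- Ew. reflexivity.
Qed.
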